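(* Let $M=\{x\in\mathbb{R}^k:x_i\ge0,\ \sum_ix_i=1\}$, $M_0=\{x\in M:\prod_ix_i=0\}$, and $M_1=M\setminus M_0$. Let $F:M\to M$ have the form $F_i(x)=x_if_i(x)$ with each $f_i:M\to(0,\infty)$ continuous. Let $p^\varepsilon$, $\varepsilon=1/N$, be the transition kernel of the multinomial process associated with $F$. Set $\rho(x,y)=\sum_{i=1}^ky_i\log\frac{y_i}{F_i(x)}$, with the conventions $0\log0=0$ and $y\log(y/0)=+\infty$ for $y>0$. Then $\rho$ and $p^\varepsilon$ satisfy Hypotheses (LD) and (LD0).
   Context: For $x\in M$ and $N\in\mathbb{N}$, let $Z_1(x),Z_2(x),\dots$ be independent multinomial random vectors with $N$ trials, $k$ outcomes, and probability $x_i$ of outcome $i$. With $\varepsilon=1/N$, the multinomial process associated with $F$ is the Markov chain on $M\cap\varepsilon\mathbb{Z}^k$ given by $X^\varepsilon_{t+1}=\varepsilon Z_{t+1}(F(X^\varepsilon_t))$. Its kernel is $p^\varepsilon(x,\Gamma)=\mathbb{P}[\varepsilon Z_1(F(x))\in\Gamma]$. Let $d(x,y)=\max_i|x_i-y_i|$. Hypothesis (LD). There is $\rho:M\times M\to[0,+\infty]$ such that: (i) $\rho$ is continuous on $M_1\times M$; (ii) $\rho(x,y)=0$ iff $y=F(x)$; (iii) for every $\beta>0$, $\inf\{\rho(x,y):x,y\in M,\ d(F(x),y)>\beta\}>0$; (iv) lower bound: for every compact $K\subset M_1$, every open ball $U$ of $M$ and every $\eta>0$, there is $\varepsilon_0>0$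 such that $\varepsilon\log p^\varepsilon(x,U)\ge-\inf_{y\in U}\rho(x,y)-\eta$ for all $x\in K$ and $\varepsilon<\varepsilon_0$; (v) upper bound: for every closed $C\subset M$ and every $\eta>0$, there is $\varepsilon_0>0$ such that $\varepsilon\log p^\varepsilon(x,C)\le-\inf_{y\in C}\rho(x,y)+\eta$ for all $x\in M$ and $\varepsilon<\varepsilon_0$. Hypothesis (LD0). For every $c>0$ there is an open neighborhood $V_0$ of $M_0$ with $\liminf_{\varepsilon\to0}\inf_{x\in V_0}\varepsilon\log p^\varepsilon(x,M_0)\ge-c$. *)

(* Defs.v *)
From Stdlib Require Import Reals Lra List Arith ClassicalEpsilon.
Open Scope R_scope.

(* Points of R^k are represented as functions nat -> R; only the
   coordinates 0..k-1 matter. *)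
Definition vec := nat -> R.

Fixpoint sumk (k : nat) (g : nat -> R) : R :=
  match k with O => 0 | S k' => sumk k' g + g k' end.
Fixpoint prodk (k : nat) (g : nat -> R) : R :=
  match k with O => 1 | S k' => prodk k' g * g k' end.

Fixpoint distk (k : nat) (x y : vec) : R :=
  match k with O => 0 | S k' => Rmax (distk k' x y) (Rabs (x k' - y k')) end.

Definition vec_eq (k : nat) (x y : vec) : Prop := forall i, (i < k)%nat -> x i = y i.

Definition inM (k : nat) (x : vec) : Prop :=
  (forall i, (i < k)%nat -> 0 <= x i) /\ sumk k x = 1.
Definition inM0 (k : nat) (x : vec) : Prop := inM k x /\ prodk k x = 0.
Definition inM1 (k : nat) (x : vec) : Prop := inM k x /\ prodk k x <> 0.

Definition Fof (f : nat -> vec -> R) : vec -> vec := fun x i => x i * f i x.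

(* extended nonnegative reals [0,+oo] (values of rho) *)
Inductive ER : Type := Fin (r : R) | PInf.
Definition ER_le (a b : ER) : Prop :=
  match a, b with
  | _, PInf => True
  | PInf, Fin _ => False
  | Fin r, Fin s => r <= s
  end.
Definition ER_lt (a b : ER) : Prop :=
  match a, b with
  | Fin _, PInf => True
  | PInf, _ => False
  | Fin r, Fin s => r < s
  end.
Definition ER_plus (a b : ER) : ER :=
  match a, b with Fin r, Fin s => Fin (r + s) | _, _ => PInf end.
Fixpoint ER_sumk (k : nat) (g : nat -> ER) : ER :=
  match k with O => Fin 0 | S k' => ER_plus (ER_sumk k' g) (g k') end.

(* m is the infimum (greatest lower bound in [-oo,+oo] restricted to ER;
   the inf of the empty set is +oo) of the set S of values *)
Definition is_inf (S : ER -> Prop) (m : ER) : Prop :=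
  (forall s, S s -> ER_le m s) /\
  (forall l, (forall s, S s -> ER_le l s) -> ER_le l m).

Definition rho_term (y q : R) : ER :=
  if Req_EM_T y 0 then Fin 0
  else if Req_EM_T q 0 then PInf
  else Fin (y * ln (y / q)).

Definition rho (k : nat) (F : vec -> vec) (x y : vec) : ER :=
  ER_sumk k (fun i => rho_term (y i) (F x i)).

(* all z = (z_0,...,z_{k-1}) in N^k with sum N *)
Fixpoint comps (k N : nat) : list (list nat) :=
  match k with
  | O => match N with O => nil :: nil | _ => nil end
  | S k' => flat_map (fun j => map (cons j) (comps k' (N - j))) (seq 0 (S N))
  end.

(* prod_i q_i^{z_i} / z_i!  (indices starting at i) *)
Fixpoint mweight (q : vec) (z : list nat) (i : nat) : R :=
  match z with
  | nil => 1
  | a :: z' => q i ^ a / INR (fact a) * mweight q z' (S i)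
  end.

Definition scaled_pt (N : nat) (z : list nat) : vec :=
  fun i => INR (nth i z O) / INR N.

Definition indic (P : Prop) : R :=
  if excluded_middle_informative P then 1 else 0.

(* P[ eps Z(q) in Gamma ], Z(q) multinomial with N trials, k outcomes,
   probabilities q_i *)
Definition multinom_prob (k N : nat) (q : vec) (Gamma : vec -> Prop) : R :=
  fold_right Rplus 0
    (map (fun z => indic (Gamma (scaled_pt N z)) * (INR (fact N) * mweight q z 0))
         (comps k N)).

(* kernel p^eps(x,Gamma) of the multinomial process associated with F,
   eps = 1/N *)
Definition kernel (k : nat) (F : vec -> vec) (N : nat) (x : vec)
  (Gamma : vec -> Prop) : R :=
  multinom_prob k N (F x) Gamma.

Definition open_set (k : nat) (U : vec -> Prop) : Prop :=
  forall x, U x -> exists r, 0 < r /\ forall y, distk k x y < r -> U y.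

Definition compact (k : nat) (K : vec -> Prop) : Prop :=
  forall (I : Type) (U : I -> vec -> Prop),
    (forall i, open_set k (U i)) ->
    (forall x, K x -> exists i, U i x) ->
    exists l : list I, forall x, K x -> exists i, In i l /\ U i x.

(* closed subset of M (relative topology; equivalently closed in R^k) *)
Definition closed_in_M (k : nat) (C : vec -> Prop) : Prop :=
  (forall y, C y -> inM k y) /\
  (forall y, inM k y ->
     (forall r, 0 < r -> exists z, C z /\ distk k y z < r) -> C y).

Definition open_in_M (k : nat) (V : vec -> Prop) : Prop :=
  (forall x, V x -> inM k x) /\
  (forall x, V x -> exists r, 0 < r /\
     forall y, inM k y -> distk k x y < r -> V y).

Definition ballM (k : nat) (c : vec) (r : R) : vec -> Prop :=
  fun y => inM k y /\ distk k c y < r.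

Definition ER_continuous_on (k : nat) (D : vec -> vec -> Prop)
  (g : vec -> vec -> ER) : Prop :=
  forall x y, D x y ->
    match g x y with
    | Fin r => forall e, 0 < e -> exists del, 0 < del /\
        forall x' y', D x' y' -> distk k x x' < del -> distk k y y' < del ->
          exists r', g x' y' = Fin r' /\ Rabs (r' - r) < e
    | PInf => forall A, exists del, 0 < del /\
        forall x' y', D x' y' -> distk k x x' < del -> distk k y y' < del ->
          ER_lt (Fin A) (g x' y')
    end.

(* "eps log P >= - m - eta", with log 0 = -oo *)
Definition lower_ok (eps P : R) (m : ER) (eta : R) : Prop :=
  match m with
  | Fin r => 0 < P /\ - r - eta <= eps * ln P
  | PInf => True
  end.
(* "eps log P <= - m + eta", with log 0 = -oo *)
Definition upper_ok (eps P : R) (m : ER) (eta : R) : Prop :=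
  match m with
  | Fin r => P = 0 \/ (0 < P /\ eps * ln P <= - r + eta)
  | PInf => P = 0
  end.

(* Hypothesis (LD); the kernel p is indexed by N, eps = 1/N *)
Definition Hyp_LD (k : nat) (F : vec -> vec) (rh : vec -> vec -> ER)
  (p : nat -> vec -> (vec -> Prop) -> R) : Prop :=
  ER_continuous_on k (fun x y => inM1 k x /\ inM k y) rh /\
  (forall x y, inM k x -> inM k y -> (rh x y = Fin 0 <-> vec_eq k y (F x))) /\
  (forall beta, 0 < beta -> forall m,
     is_inf (fun v => exists x y, inM k x /\ inM k y /\
                        distk k (F x) y > beta /\ v = rh x y) m ->
     ER_lt (Fin 0) m) /\
  (forall K, compact k K -> (forall x, K x -> inM1 k x) ->
   forall c r, inM k c -> 0 < r ->
   forall eta, 0 < eta ->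
   exists eps0, 0 < eps0 /\
     forall N, (0 < N)%nat -> / INR N < eps0 ->
     forall x, K x ->
     forall m, is_inf (fun v => exists y, ballM k c r y /\ v = rh x y) m ->
       lower_ok (/ INR N) (p N x (ballM k c r)) m eta) /\
  (forall C, closed_in_M k C ->
   forall eta, 0 < eta ->
   exists eps0, 0 < eps0 /\
     forall N, (0 < N)%nat -> / INR N < eps0 ->
     forall x, inM k x ->
     forall m, is_inf (fun v => exists y, C y /\ v = rh x y) m ->
       upper_ok (/ INR N) (p N x C) m eta).

(* Hypothesis (LD0); the liminf over eps = 1/N -> 0 of the infimum over V0
   is unfolded: liminf >= -c  iff for every del > 0, eventually the inf is
   >= -c - del, iff eventually every value is >= -c - del *)
Definition Hyp_LD0 (k : nat) (p : nat -> vec -> (vec -> Prop) -> R) : Prop :=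
  forall c, 0 < c ->
  exists V0, open_in_M k V0 /\ (forall x, inM0 k x -> V0 x) /\
    forall del, 0 < del -> exists N0, forall N, (N0 <= N)%nat -> (0 < N)%nat ->
      forall x, V0 x ->
        0 < p N x (inM0 k) /\ - c - del <= / INR N * ln (p N x (inM0 k)).

(* Main.v *)
Require Import Defs.
From Stdlib Require Import Reals Lra Lia List Arith ZArith Classical ClassicalEpsilon.
Open Scope R_scope.

Lemma ln_le_sub1 : forall x, 0 < x -> ln x <= x - 1.
Proof. intros x Hx. pose proof (exp_ineq1_le (ln x)). rewrite exp_ln in H; lra. Qed.

Lemma sumk_ext : forall k g h, (forall i, (i < k)%nat -> g i = h i) -> sumk k g = sumk k h.
Proof. induction k; simpl; intros; auto. rewrite (IHk g h); [rewrite H|]; auto. Qed.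

Lemma prodk_ext : forall k g h, (forall i, (i < k)%nat -> g i = h i) -> prodk k g = prodk k h.
Proof. induction k; simpl; intros; auto. rewrite (IHk g h); [rewrite H|]; auto. Qed.

Lemma sumk_plus : forall k g h, sumk k (fun i => g i + h i) = sumk k g + sumk k h.
Proof. induction k; simpl; intros; [lra|]. rewrite IHk; lra. Qed.

Lemma sumk_minus : forall k g h, sumk k (fun i => g i - h i) = sumk k g - sumk k h.
Proof. induction k; simpl; intros; [lra|]. rewrite IHk; lra. Qed.

Lemma sumk_scal : forall k a g, sumk k (fun i => a * g i) = a * sumk k g.
Proof. induction k; simpl; intros; [lra|]. rewrite IHk; lra. Qed.

Lemma sumk_const0 : forall k, sumk k (fun _ => 0) = 0.
Proof. induction k; simpl; auto; lra. Qed.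

Lemma sumk_le : forall k g h, (forall i, (i < k)%nat -> g i <= h i) -> sumk k g <= sumk k h.
Proof. induction k; simpl; intros; [lra|].
  pose proof (IHk g h ltac:(auto)). pose proof (H k ltac:(lia)). lra. Qed.

Lemma sumk_nonneg : forall k g, (forall i, (i < k)%nat -> 0 <= g i) -> 0 <= sumk k g.
Proof. intros. rewrite <- (sumk_const0 k). apply sumk_le; auto. Qed.

Lemma sumk_ge_term : forall k g j, (forall i, (i < k)%nat -> 0 <= g i) -> (j < k)%nat -> g j <= sumk k g.
Proof. induction k; simpl; intros; [lia|].
  destruct (Nat.eq_dec j k). subst. pose proof (sumk_nonneg k g ltac:(auto)). lra.
  pose proof (IHk g j ltac:(auto) ltac:(lia)). pose proof (H k ltac:(lia)). lra. Qed.

Lemma sumk_const : forall k c, sumk k (fun _ => c) = INR k * c.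
Proof. induction k; intros; [simpl; lra|]. cbn [sumk]. rewrite IHk. rewrite S_INR. lra. Qed.

Lemma sumk_shift : forall k g, sumk (S k) g = g O + sumk k (fun i => g (S i)).
Proof. induction k; intros. simpl; lra.
  change (sumk (S (S k)) g) with (sumk (S k) g + g (S k)). rewrite IHk. simpl. lra. Qed.

Lemma prodk_shift : forall k g, prodk (S k) g = g O * prodk k (fun i => g (S i)).
Proof. induction k; intros. simpl; lra.
  change (prodk (S (S k)) g) with (prodk (S k) g * g (S k)). rewrite IHk. simpl. lra. Qed.

Lemma prodk_mult : forall k g h, prodk k (fun i => g i * h i) = prodk k g * prodk k h.
Proof. induction k; simpl; intros; [lra|]. rewrite IHk; lra. Qed.

Lemma prodk_nonneg : forall k g, (forall i, (i < k)%nat -> 0 <= g i) -> 0 <= prodk k g.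
Proof. induction k; simpl; intros; [lra|]. apply Rmult_le_pos; auto. Qed.

Lemma prodk_pos : forall k g, (forall i, (i < k)%nat -> 0 < g i) -> 0 < prodk k g.
Proof. induction k; simpl; intros; [lra|]. apply Rmult_lt_0_compat; auto. Qed.

Lemma prodk_zero : forall k g j, (j < k)%nat -> g j = 0 -> prodk k g = 0.
Proof. induction k; simpl; intros; [lia|].
  destruct (Nat.eq_dec j k). subst. rewrite H0; lra.
  rewrite (IHk g j); [lra|lia|auto]. Qed.

Lemma prodk_zero_inv : forall k g, prodk k g = 0 -> exists j, (j < k)%nat /\ g j = 0.
Proof. induction k; simpl; intros. lra.
  apply Rmult_integral in H. destruct H. destruct (IHk g H) as [j [? ?]]. exists j; split; auto.
  exists k; auto. Qed.

Lemma prodk_le : forall k g h, (forall i, (i < k)%nat -> 0 <= g i <= h i) -> prodk k g <= prodk k h.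
Proof. induction k; simpl; intros; [lra|].
  apply Rmult_le_compat; auto. apply prodk_nonneg. intros; apply H; lia. apply H; lia.
  apply H; lia. Qed.

Lemma prodk_const : forall k c, prodk k (fun _ => c) = c ^ k.
Proof. induction k; simpl; intros; [lra|]. rewrite IHk; ring. Qed.

Lemma exp_sumk : forall k g, exp (sumk k g) = prodk k (fun i => exp (g i)).
Proof. induction k; simpl; intros. apply exp_0. rewrite exp_plus, IHk; auto. Qed.

Lemma sumk_abs : forall k g, Rabs (sumk k g) <= sumk k (fun i => Rabs (g i)).
Proof. induction k; simpl; intros. rewrite Rabs_R0; lra.
  eapply Rle_trans. apply Rabs_triang. pose proof (IHk g); lra. Qed.

Lemma distk_nonneg : forall k x y, 0 <= distk k x y.
Proof. induction k; simpl; intros. lra. eapply Rle_trans; [apply IHk|apply Rmax_l]. Qed.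

Lemma distk_coord : forall k x y i, (i < k)%nat -> Rabs (x i - y i) <= distk k x y.
Proof. induction k; simpl; intros. lia. destruct (Nat.eq_dec i k). subst. apply Rmax_r.
  eapply Rle_trans; [apply IHk; lia|apply Rmax_l]. Qed.

Lemma distk_lt : forall k x y r, 0 < r -> (forall i, (i < k)%nat -> Rabs (x i - y i) < r) -> distk k x y < r.
Proof. induction k; simpl; intros. lra. apply Rmax_lub_lt; auto. Qed.

Lemma distk_le : forall k x y r, 0 <= r -> (forall i, (i < k)%nat -> Rabs (x i - y i) <= r) -> distk k x y <= r.
Proof. induction k; simpl; intros. lra. apply Rmax_lub; auto. Qed.

Lemma distk_sym : forall k x y, distk k x y = distk k y x.
Proof. induction k; simpl; intros; auto. rewrite IHk, Rabs_minus_sym; auto. Qed.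

Lemma distk_tri : forall k x y z, distk k x z <= distk k x y + distk k y z.
Proof. intros. apply distk_le. pose proof (distk_nonneg k x y); pose proof (distk_nonneg k y z); lra.
  intros. pose proof (distk_coord k x y i H). pose proof (distk_coord k y z i H).
  replace (x i - z i) with ((x i - y i) + (y i - z i)) by ring.
  eapply Rle_trans. apply Rabs_triang. lra. Qed.

Lemma inM_le1 : forall k x i, inM k x -> (i < k)%nat -> x i <= 1.
Proof. intros k x i [H1 H2] Hi. rewrite <- H2. apply sumk_ge_term; auto. Qed.

Lemma inM1_pos : forall k x i, inM1 k x -> (i < k)%nat -> 0 < x i.
Proof. intros k x i [[H1 H2] H3] Hi. destruct (H1 i Hi); auto. exfalso; apply H3.
  apply (prodk_zero k x i); auto. Qed.

Lemma finite_delta : forall (P : nat -> R -> Prop) k,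
  (forall i d d', P i d -> 0 < d' <= d -> P i d') ->
  (forall i, (i < k)%nat -> exists d, 0 < d /\ P i d) ->
  exists d, 0 < d /\ forall i, (i < k)%nat -> P i d.
Proof. intros P k Hm. induction k; intros H.
  exists 1; split; [lra|intros; lia].
  destruct IHk as [d1 [Hd1 H1]]. intros; apply H; lia.
  destruct (H k ltac:(lia)) as [d2 [Hd2 H2]].
  exists (Rmin d1 d2); split. apply Rmin_glb_lt; auto.
  intros i Hi. destruct (Nat.eq_dec i k). subst. apply Hm with d2; auto. split. apply Rmin_glb_lt; auto. apply Rmin_r.
  apply Hm with d1; [apply H1; lia|]. split. apply Rmin_glb_lt; auto. apply Rmin_l. Qed.

Lemma rho_term_fin : forall y q, (y <> 0 -> q <> 0) -> rho_term y q = Fin (y * ln (y / q)).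
Proof. intros. unfold rho_term. destruct (Req_EM_T y 0). subst; f_equal; ring.
  destruct (Req_EM_T q 0). exfalso; apply H; auto. auto. Qed.

Lemma rho_fin : forall k (y q : vec) r, ER_sumk k (fun i => rho_term (y i) (q i)) = Fin r ->
  r = sumk k (fun i => y i * ln (y i / q i)) /\ (forall i, (i < k)%nat -> y i <> 0 -> q i <> 0).
Proof. induction k; simpl; intros. inversion H; split; auto. intros; lia.
  destruct (ER_sumk k (fun i => rho_term (y i) (q i))) eqn:E; [|discriminate].
  destruct (IHk y q r0 E) as [H1 H2].
  unfold rho_term in H. destruct (Req_EM_T (y k) 0).
  - inversion H. split. rewrite e, H1. ring. intros. destruct (Nat.eq_dec i k). subst; contradiction. apply H2; auto; lia.
  - destruct (Req_EM_T (q k) 0). discriminate. inversion H. split. rewrite H1; auto.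
    intros. destruct (Nat.eq_dec i k). subst; auto. apply H2; auto; lia. Qed.

Lemma rho_inf : forall k (y q : vec), ER_sumk k (fun i => rho_term (y i) (q i)) = PInf ->
  exists i, (i < k)%nat /\ y i <> 0 /\ q i = 0.
Proof. induction k; simpl; intros. discriminate.
  destruct (ER_sumk k (fun i => rho_term (y i) (q i))) eqn:E.
  - unfold rho_term in H. destruct (Req_EM_T (y k) 0). discriminate.
    destruct (Req_EM_T (q k) 0). exists k; auto. discriminate.
  - destruct (IHk y q E) as [i [? ?]]. exists i; split; auto. Qed.

Lemma rho_fin_intro : forall k (y q : vec), (forall i, (i < k)%nat -> y i <> 0 -> q i <> 0) ->
  ER_sumk k (fun i => rho_term (y i) (q i)) = Fin (sumk k (fun i => y i * ln (y i / q i))).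
Proof. induction k; simpl; intros. auto. rewrite IHk by auto. rewrite rho_term_fin by auto. auto. Qed.

Lemma ER_cases : forall a : ER, (exists r, a = Fin r) \/ a = PInf.
Proof. destruct a; eauto. Qed.

(* pointwise Hellinger-type bound *)
Lemma hell_pt : forall y q, 0 <= y -> 0 <= q -> (y <> 0 -> q <> 0) ->
  2 * (y - sqrt y * sqrt q) <= y * ln (y / q).
Proof. intros y q Hy Hq Hyq. destruct (Req_EM_T y 0). subst. rewrite sqrt_0. lra.
  assert (Hy' : 0 < y) by lra. assert (Hq' : 0 < q) by (destruct Hq; auto; exfalso; apply Hyq; auto).
  set (a := sqrt y). set (b := sqrt q).
  assert (Ha : 0 < a) by (apply sqrt_lt_R0; auto). assert (Hb : 0 < b) by (apply sqrt_lt_R0; auto).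
  assert (Ea : a * a = y) by (apply sqrt_sqrt; lra). assert (Eb : b * b = q) by (apply sqrt_sqrt; lra).
  assert (y / q = (a / b) ^ 2). { rewrite <- Ea, <- Eb. field. lra. }
  rewrite H, ln_pow by (apply Rdiv_lt_0_compat; auto).
  assert (ln (a / b) >= 1 - b / a).
  { assert (ln (b / a) <= b / a - 1) by (apply ln_le_sub1; apply Rdiv_lt_0_compat; auto).
    replace (a / b) with (/ (b / a)) by (field; lra). rewrite ln_Rinv by (apply Rdiv_lt_0_compat; auto). lra. }
  simpl INR. replace (y - a * b) with (y * (1 - b / a)) by (rewrite <- Ea; field; lra).
  assert (0 <= y * (ln (a / b) - (1 - b / a))) by (apply Rmult_le_pos; lra). nra. Qed.

Lemma KL_hell : forall k (y q : vec),
  (forall i, (i < k)%nat -> 0 <= y i) -> (forall i, (i < k)%nat -> 0 <= q i) ->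
  sumk k y = 1 -> sumk k q = 1 -> (forall i, (i < k)%nat -> y i <> 0 -> q i <> 0) ->
  sumk k (fun i => (sqrt (y i) - sqrt (q i)) ^ 2) <= sumk k (fun i => y i * ln (y i / q i)).
Proof. intros. apply Rle_trans with (sumk k (fun i => 2 * (y i - sqrt (y i) * sqrt (q i)))).
  - right. rewrite sumk_scal, sumk_minus.
    transitivity (sumk k (fun i => y i + q i - 2 * (sqrt (y i) * sqrt (q i)))).
    apply sumk_ext. intros. rewrite <- Rsqr_pow2. unfold Rsqr. 
    replace ((sqrt (y i) - sqrt (q i)) * (sqrt (y i) - sqrt (q i))) with
      (sqrt (y i) * sqrt (y i) + sqrt (q i) * sqrt (q i) - 2 * (sqrt (y i) * sqrt (q i))) by ring.
    rewrite !sqrt_sqrt; auto.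
    rewrite sumk_minus, sumk_plus, sumk_scal. lra.
  - apply sumk_le. intros. apply hell_pt; auto. Qed.

Lemma sq_gap : forall y q b, 0 <= y <= 1 -> 0 <= q <= 1 -> 0 < b -> b < Rabs (q - y) -> b * b / 4 <= (sqrt y - sqrt q) ^ 2.
Proof. intros y q b H H0 Hb H1. assert (Hy : sqrt y <= 1) by (rewrite <- sqrt_1; apply sqrt_le_1_alt; lra).
  assert (Hq : sqrt q <= 1) by (rewrite <- sqrt_1; apply sqrt_le_1_alt; lra).
  pose proof (sqrt_pos y). pose proof (sqrt_pos q).
  assert (q - y = (sqrt q - sqrt y) * (sqrt q + sqrt y)).
  { replace ((sqrt q - sqrt y) * (sqrt q + sqrt y)) with (sqrt q * sqrt q - sqrt y * sqrt y) by ring.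
    rewrite !sqrt_sqrt; lra. }
  rewrite H4, Rabs_mult in H1. rewrite (Rabs_pos_eq (sqrt q + sqrt y)) in H1 by lra.
  assert (b < 2 * Rabs (sqrt q - sqrt y)).
  { pose proof (Rabs_pos (sqrt q - sqrt y)). nra. }
  rewrite <- Rsqr_pow2. rewrite Rsqr_abs. rewrite Rabs_minus_sym. unfold Rsqr.
  assert (0 < b / 2 < Rabs (sqrt q - sqrt y)) by lra. nra.
Qed.

Lemma KL_ge_hell : forall k (F : vec -> vec) x y r, inM k (F x) -> inM k y -> rho k F x y = Fin r ->
  sumk k (fun i => (sqrt (y i) - sqrt (F x i)) ^ 2) <= r.
Proof. intros k F x y r [Hq1 Hq2] [Hy1 Hy2] H. unfold rho in H. apply rho_fin in H as [H1 H2].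
  subst r. apply KL_hell; auto. Qed.

Lemma LD_ii : forall k (F : vec -> vec) x y, inM k (F x) -> inM k y ->
  (rho k F x y = Fin 0 <-> vec_eq k y (F x)).
Proof. intros k F x y HF Hy. split.
  - intros H. pose proof (KL_ge_hell k F x y 0 HF Hy H) as Hs.
    intros i Hi. assert (Hnn : forall j, (j < k)%nat -> 0 <= (sqrt (y j) - sqrt (F x j)) ^ 2) by (intros; apply pow2_ge_0).
    pose proof (sumk_ge_term k _ i Hnn Hi). pose proof (Hnn i Hi).
    assert ((sqrt (y i) - sqrt (F x i)) ^ 2 = 0) by lra.
    assert (sqrt (y i) = sqrt (F x i)). { simpl in H2. rewrite Rmult_1_r in H2. apply Rmult_integral in H2. lra. }
    destruct HF as [HF1 _]. destruct Hy as [Hy1 _].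
    apply sqrt_inj; auto.
  - intros H. unfold rho. rewrite rho_fin_intro. f_equal. transitivity (sumk k (fun _ => 0)).
    apply sumk_ext. intros. rewrite H by auto. destruct (Req_EM_T (F x i) 0). rewrite e; ring.
    unfold Rdiv. rewrite Rinv_r by auto. rewrite ln_1; ring. apply sumk_const0.
    intros. rewrite <- H; auto. Qed.

Lemma distk_gt_exists : forall k x y b, 0 <= b -> b < distk k x y -> exists i, (i < k)%nat /\ b < Rabs (x i - y i).
Proof. intros. destruct (classic (exists i, (i < k)%nat /\ b < Rabs (x i - y i))); auto.
  exfalso. assert (distk k x y <= b). { apply distk_le. auto.
  intros. destruct (Rle_lt_dec (Rabs (x i - y i)) b); auto. exfalso; apply H1; eauto. } lra.
Qed.

Lemma LD_iii : forall k (F : vec -> vec), (forall x, inM k x -> inM k (F x)) ->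
  forall beta, 0 < beta -> forall m,
     is_inf (fun v => exists x y, inM k x /\ inM k y /\
                        distk k (F x) y > beta /\ v = rho k F x y) m ->
     ER_lt (Fin 0) m.
Proof. intros k F HF beta Hb m [_ Hm].
  assert (ER_le (Fin (beta * beta / 4)) m).
  { apply Hm. intros s [x [y [Hx [Hy [Hd Hs]]]]]. subst s.
    destruct (ER_cases (rho k F x y)) as [[r Hr]|Hr]; rewrite Hr; simpl; auto.
    pose proof (KL_ge_hell k F x y r (HF x Hx) Hy Hr).
    destruct (distk_gt_exists k (F x) y beta ltac:(lra) Hd) as [i [Hi Hi2]].
    assert (Hnn : forall j, (j < k)%nat -> 0 <= (sqrt (y j) - sqrt (F x j)) ^ 2) by (intros; apply pow2_ge_0).
    pose proof (sumk_ge_term k _ i Hnn Hi).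
    pose proof (sq_gap (y i) (F x i) beta).
    pose proof (inM_le1 k (F x) i (HF x Hx) Hi). pose proof (inM_le1 k y i Hy Hi).
    destruct (HF x Hx) as [HF1 _]. destruct Hy as [Hy1 _].
    pose proof (HF1 i Hi). pose proof (Hy1 i Hi). 
    assert (beta * beta / 4 <= (sqrt (y i) - sqrt (F x i)) ^ 2) by (apply H1; auto; lra).
    cbv beta in H0. lra. }
  destruct m; simpl in *; auto. assert (0 < beta * beta / 4) by (apply Rdiv_lt_0_compat; [nra|lra]). lra.
Qed.

Definition fsum {A} (l : list A) (g : A -> R) : R := fold_right Rplus 0 (map g l).

Lemma fsum_app : forall A (l1 l2 : list A) g, fsum (l1 ++ l2) g = fsum l1 g + fsum l2 g.
Proof. induction l1; simpl; intros; unfold fsum in *; simpl. lra. rewrite IHl1. lra. Qed.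

Lemma fsum_flat_map : forall A B (l : list A) (h : A -> list B) g,
  fsum (flat_map h l) g = fsum l (fun j => fsum (h j) g).
Proof. induction l; simpl; intros. reflexivity. rewrite fsum_app, IHl. reflexivity. Qed.

Lemma fsum_map : forall A B (l : list A) (c : A -> B) g, fsum (map c l) g = fsum l (fun x => g (c x)).
Proof. intros. unfold fsum. rewrite map_map. auto. Qed.

Lemma fsum_scal : forall A (l : list A) a g, fsum l (fun x => a * g x) = a * fsum l g.
Proof. induction l; unfold fsum in *; simpl; intros. ring. rewrite IHl. ring. Qed.

Lemma fsum_ext : forall A (l : list A) g h, (forall x, In x l -> g x = h x) -> fsum l g = fsum l h.
Proof. induction l; unfold fsum in *; simpl; intros. auto. rewrite H by auto. rewrite (IHl g h); auto. Qed.

Lemma fsum_le : forall A (l : list A) g h, (forall x, In x l -> g x <= h x) -> fsum l g <= fsum l h.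
Proof. induction l; unfold fsum in *; simpl; intros. lra. pose proof (H a (or_introl eq_refl)).
  pose proof (IHl g h (fun x Hx => H x (or_intror Hx))). lra. Qed.

Lemma fsum_nonneg : forall A (l : list A) g, (forall x, In x l -> 0 <= g x) -> 0 <= fsum l g.
Proof. induction l; unfold fsum in *; simpl; intros. lra. pose proof (H a (or_introl eq_refl)).
  pose proof (IHl g (fun x Hx => H x (or_intror Hx))). lra. Qed.

Lemma fsum_ge_elem : forall A (l : list A) g a, (forall x, In x l -> 0 <= g x) -> In a l -> g a <= fsum l g.
Proof. induction l; unfold fsum in *; simpl; intros. contradiction.
  destruct H0. subst. pose proof (fsum_nonneg A l g (fun x Hx => H x (or_intror Hx))). unfold fsum in H0. lra.
  pose proof (H a (or_introl eq_refl)). pose proof (IHl g a0 (fun x Hx => H x (or_intror Hx)) H0). lra. Qed.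

Lemma fsum_le_const : forall A (l : list A) g c, (forall x, In x l -> g x <= c) -> fsum l g <= INR (length l) * c.
Proof. induction l; intros. unfold fsum; simpl; lra.
  change (length (a::l)) with (S (length l)). rewrite S_INR.
  pose proof (H a (or_introl eq_refl)). pose proof (IHl g c (fun x Hx => H x (or_intror Hx))).
  unfold fsum in *; simpl. lra. Qed.

Lemma fsum_seq : forall N (f : nat -> R), fsum (seq 0 (S N)) f = sum_f_R0 f N.
Proof. induction N; intros. unfold fsum; simpl; lra.
  rewrite seq_S, fsum_app, IHN. unfold fsum; simpl. lra. Qed.

Lemma comps_spec : forall k N z, In z (comps k N) -> length z = k /\ list_sum z = N.
Proof. induction k; intros.
  destruct N; simpl in H; [destruct H; [subst; auto|contradiction]|contradiction].
  cbn [comps] in H. apply in_flat_map in H as [j [Hj Hz]]. apply in_map_iff in Hz as [z' [Ez Hz']]. subst z.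
  apply IHk in Hz' as [H1 H2]. apply in_seq in Hj. simpl. split; auto. lia. Qed.

Lemma comps_intro : forall k N z, length z = k -> list_sum z = N -> In z (comps k N).
Proof. induction k; intros.
  destruct z; simpl in *; try lia. subst; simpl; auto.
  destruct z as [|j z]; simpl in H, H0; try lia. cbn [comps].
  apply in_flat_map. exists j. split. apply in_seq. lia.
  apply in_map. apply IHk; lia. Qed.

Lemma list_sum_map_le : forall A (l : list A) g c, (forall x, In x l -> (g x <= c)%nat) ->
  (list_sum (map g l) <= length l * c)%nat.
Proof. induction l; simpl; intros. lia. pose proof (H a (or_introl eq_refl)).
  pose proof (IHl g c (fun x Hx => H x (or_intror Hx))). lia. Qed.

Lemma comps_length : forall k N, (length (comps k N) <= (S N) ^ k)%nat.
Proof. induction k; intros. destruct N; simpl; lia.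
  cbn [comps]. rewrite length_flat_map. eapply Nat.le_trans. apply list_sum_map_le with (c := (S N ^ k)%nat).
  intros j Hj. rewrite length_map. eapply Nat.le_trans. apply IHk. apply Nat.pow_le_mono_l. lia.
  rewrite length_seq. rewrite Nat.pow_succ_r'. lia. Qed.

Lemma mweight_prodk : forall z q s, mweight q z s =
  prodk (length z) (fun j => q (s + j)%nat ^ nth j z O / INR (fact (nth j z O))).
Proof. induction z; intros. simpl; auto. change (length (a :: z)) with (S (length z)).
  rewrite prodk_shift. cbn [mweight]. rewrite IHz. simpl. rewrite Nat.add_0_r. f_equal. apply prodk_ext. intros. f_equal. f_equal. f_equal. lia. Qed.

Lemma sumk_nth : forall z, sumk (length z) (fun i => INR (nth i z O)) = INR (list_sum z).
Proof. induction z. simpl; auto. change (length (a :: z)) with (S (length z)). rewrite sumk_shift. simpl. rewrite IHz. rewrite plus_INR. ring. Qed.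

Lemma binom_fact : forall x y N, sum_f_R0 (fun j => x ^ j / INR (fact j) * (y ^ (N - j) / INR (fact (N - j)))) N
  = (x + y) ^ N / INR (fact N).
Proof. intros. rewrite binomial.
  match goal with |- _ = ?S / ?D => replace (S / D) with (/ D * S) by (unfold Rdiv; ring) end.
  rewrite scal_sum.
  apply sum_eq. intros. unfold C. field. repeat split; apply INR_fact_neq_0. Qed.

Lemma multinom_shift : forall k N q s,
  fsum (comps k N) (fun z => mweight q z s) = (sumk k (fun i => q (s + i)%nat)) ^ N / INR (fact N).
Proof. induction k; intros.
  - destruct N; unfold fsum; cbn [comps map fold_right sumk mweight].
    simpl; field. rewrite pow_i by lia. unfold Rdiv; ring.
  - cbn [comps]. rewrite fsum_flat_map. rewrite fsum_seq.
    rewrite sumk_shift, Nat.add_0_r.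
    replace (sumk k (fun i => q (s + S i)%nat)) with (sumk k (fun i => q (S s + i)%nat))
      by (apply sumk_ext; intros; f_equal; lia).
    rewrite <- binom_fact. apply sum_eq. intros j Hj.
    rewrite fsum_map. simpl. rewrite fsum_scal. rewrite IHk. reflexivity. Qed.

Lemma multinom : forall k N q,
  fsum (comps k N) (fun z => INR (fact N) * mweight q z O) = (sumk k q) ^ N.
Proof. intros. rewrite fsum_scal, multinom_shift. simpl. field_simplify. f_equal. apply INR_fact_neq_0. Qed.

Lemma exp_pow' : forall x n, exp x ^ n = exp (INR n * x).
Proof. induction n. simpl. rewrite Rmult_0_l, exp_0; auto.
  rewrite S_INR. simpl pow. rewrite IHn. rewrite <- exp_plus. f_equal. ring. Qed.

Lemma exp_ln_pow : forall a n, 0 < a -> exp (INR n * ln a) = a ^ n.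
Proof. intros. rewrite <- ln_pow by auto. apply exp_ln. apply pow_lt; auto. Qed.

Lemma key1 : forall n, INR (S n) ^ n <= exp 1 * INR n ^ n.
Proof. intros. destruct n. simpl. pose proof (exp_ineq1_le 1). lra.
  assert (Hm : 0 < INR (S n)) by (apply lt_0_INR; lia).
  assert (INR (S (S n)) = INR (S n) * (1 + / INR (S n))) by (rewrite (S_INR (S n)); field; lra).
  set (m := INR (S n)) in *.
  rewrite H, Rpow_mult_distr. rewrite Rmult_comm.
  apply Rmult_le_compat_r. apply pow_le; lra.
  eapply Rle_trans. apply pow_incr. split. assert (0 < / m) by (apply Rinv_0_lt_compat; auto). lra.
  apply exp_ineq1_le. rewrite exp_pow'. fold m. right. f_equal. field. lra. Qed.

Lemma key2 : forall n, (1 <= n)%nat -> exp 1 * INR n ^ (S n) <= INR (S n) ^ (S n).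
Proof. intros. assert (Hm : 0 < INR n) by (apply lt_0_INR; lia).
  assert (E : INR (S n) = INR n * ((INR n + 1) / INR n)) by (rewrite S_INR; field; lra).
  set (m := INR n) in *.
  rewrite E, Rpow_mult_distr. rewrite Rmult_comm. apply Rmult_le_compat_l. apply pow_le; lra.
  rewrite <- exp_ln_pow by (apply Rdiv_lt_0_compat; lra).
  destruct (Rle_lt_dec (exp 1) (exp (INR (S n) * ln ((m + 1) / m)))); auto.
  apply exp_lt_inv in r. exfalso.
  assert (ln (m / (m + 1)) <= m / (m + 1) - 1) by (apply ln_le_sub1; apply Rdiv_lt_0_compat; lra).
  replace ((m + 1) / m) with (/ (m / (m + 1))) in r by (field; lra).
  rewrite ln_Rinv in r by (apply Rdiv_lt_0_compat; lra).
  rewrite S_INR in r. fold m in r.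
  assert (m / (m + 1) - 1 = - / (m + 1)) by (field; lra). rewrite H1 in H0.
  assert ((m + 1) * (- ln (m / (m + 1))) >= (m + 1) * / (m + 1)).
  { apply Rle_ge. apply Rmult_le_compat_l; lra. }
  rewrite Rinv_r in H2 by lra. lra. Qed.

Lemma stirling1 : forall n, INR n ^ n <= INR (fact n) * exp (INR n).
Proof. induction n. simpl. rewrite exp_0; lra.
  pose proof (key1 n). rewrite fact_simpl, mult_INR.
  replace (INR (S n) ^ S n) with (INR (S n) * INR (S n) ^ n) by (simpl; ring).
  assert (E : exp (INR (S n)) = exp (INR n) * exp 1) by (rewrite S_INR, exp_plus; auto).
  rewrite E. assert (0 < INR (S n)) by (apply lt_0_INR; lia). pose proof (exp_pos 1).
  assert (INR (S n) ^ n <= INR (fact n) * exp (INR n) * exp 1).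
  { eapply Rle_trans. apply H. rewrite (Rmult_comm _ (exp 1)). apply Rmult_le_compat_l; lra. }
  rewrite Rmult_assoc. apply Rmult_le_compat_l. lra. rewrite <- Rmult_assoc. auto. Qed.

Lemma stirling2 : forall n, (1 <= n)%nat -> INR (fact n) * exp (INR n) <= exp 1 * INR n ^ (S n).
Proof. induction n; intros. lia. destruct n. simpl. lra.
  pose proof (IHn ltac:(lia)). pose proof (key2 (S n) ltac:(lia)).
  rewrite fact_simpl, mult_INR. rewrite (S_INR (S n)) at 2. rewrite exp_plus.
  assert (0 < INR (S (S n))) by (apply lt_0_INR; lia).
  pose proof (exp_pos 1).
  apply Rle_trans with (INR (S (S n)) * exp 1 * (INR (fact (S n)) * exp (INR (S n)))). right; ring.
  apply Rle_trans with (INR (S (S n)) * exp 1 * (exp 1 * INR (S n) ^ S (S n))).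
  apply Rmult_le_compat_l. nra. auto.
  replace (INR (S (S n)) ^ S (S (S n))) with (INR (S (S n)) * INR (S (S n)) ^ S (S n)) by (simpl; ring).
  apply Rle_trans with (INR (S (S n)) * exp 1 * INR (S (S n)) ^ S (S n)).
  replace (INR (S (S n)) * exp 1 * (exp 1 * INR (S n) ^ S (S n))) with (INR (S (S n)) * exp 1 * (exp 1 * INR (S n) ^ S (S n))) by ring.
  rewrite Rmult_assoc. rewrite (Rmult_assoc (INR (S (S n))) (exp 1) (INR (S (S n)) ^ S (S n))).
  apply Rmult_le_compat_l. lra. apply Rmult_le_compat_l. lra. auto. right; ring. Qed.

Lemma fact_upper : forall n, INR (fact n) * exp (INR n) <= exp 1 * INR (max n 1) * INR n ^ n.
Proof. intros. destruct n. simpl. rewrite exp_0. pose proof (exp_ineq1_le 1). lra.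
  replace (max (S n) 1) with (S n) by lia. pose proof (stirling2 (S n) ltac:(lia)).
  replace (INR (S n) ^ S (S n)) with (INR (S n) * INR (S n) ^ S n) in H by (simpl; ring). lra. Qed.

Lemma Rdiv_le_0_compat : forall a b, 0 <= a -> 0 < b -> 0 <= a / b.
Proof. intros. unfold Rdiv. apply Rmult_le_pos; auto. left; apply Rinv_0_lt_compat; auto. Qed.

Definition zz (z : list nat) (i : nat) : nat := nth i z O.
Definition term (N : nat) (q : vec) (z : list nat) : R := INR (fact N) * mweight q z O.
Definition Gf (k N : nat) (q : vec) (z : list nat) : R :=
  prodk k (fun i => (INR N * q i / INR (zz z i)) ^ (zz z i)).

Lemma pow_list_sum : forall a z, a ^ (list_sum z) = prodk (length z) (fun i => a ^ nth i z O).
Proof. induction z. simpl; auto. change (length (a0 :: z)) with (S (length z)).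
  rewrite prodk_shift. simpl list_sum. rewrite pow_add, IHz. auto. Qed.

Lemma term_prodk : forall k N q z, In z (comps k N) ->
  term N q z = INR (fact N) * prodk k (fun i => q i ^ zz z i / INR (fact (zz z i))).
Proof. intros. unfold term. rewrite mweight_prodk. apply comps_spec in H as [H1 H2]. rewrite H1. auto. Qed.

Lemma comps_sum : forall k N z, In z (comps k N) -> sumk k (fun i => INR (zz z i)) = INR N.
Proof. intros. apply comps_spec in H as [H1 H2]. subst. unfold zz. apply sumk_nth. Qed.

Lemma comps_le : forall k N z i, In z (comps k N) -> (i < k)%nat -> (zz z i <= N)%nat.
Proof. intros. apply INR_le. rewrite <- (comps_sum k N z H). 
  apply (sumk_ge_term k (fun i => INR (zz z i))); auto. intros; apply pos_INR. Qed.

Lemma term_nonneg : forall k N q z, In z (comps k N) -> (forall i, (i < k)%nat -> 0 <= q i) -> 0 <= term N q z.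
Proof. intros. rewrite (term_prodk k) by auto. apply Rmult_le_pos. apply pos_INR.
  apply prodk_nonneg. intros. apply Rmult_le_pos. apply pow_le; auto. 
  left; apply Rinv_0_lt_compat, INR_fact_lt_0. Qed.

Lemma Gf_nonneg : forall k N q z, (forall i, (i < k)%nat -> 0 <= q i) -> 0 <= Gf k N q z.
Proof. intros. apply prodk_nonneg. intros. apply pow_le. destruct (Nat.eq_dec (zz z i) 0).
  rewrite e; simpl. unfold Rdiv; rewrite Rinv_0; lra.
  apply Rdiv_le_0_compat. apply Rmult_le_pos; auto. apply pos_INR. apply lt_0_INR; lia. Qed.

Lemma term_upper : forall k N q z, (1 <= N)%nat -> In z (comps k N) ->
  (forall i, (i < k)%nat -> 0 <= q i) -> term N q z <= Gf k N q z.
Proof. intros k N q z HN Hz Hq.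
  assert (HNp : 0 < INR N) by (apply lt_0_INR; lia).
  set (p := fun i => INR (zz z i) / INR N).
  assert (Hp : forall i, (i < k)%nat -> 0 <= p i) by (intros; unfold p; apply Rdiv_le_0_compat; [apply pos_INR|auto]).
  assert (Hs : sumk k p = 1).
  { unfold p. transitivity (/ INR N * sumk k (fun i => INR (zz z i))).
    rewrite <- sumk_scal. apply sumk_ext; intros; unfold Rdiv; ring.
    rewrite (comps_sum k N z Hz). field; lra. }
  assert (Hp1 : term N p z <= 1).
  { pose proof (multinom k N p). rewrite Hs, pow1 in H. rewrite <- H.
    apply (fsum_ge_elem _ _ (fun z => INR (fact N) * mweight p z O)); auto.
    intros. apply (term_nonneg k N p x); auto. }
  assert (E : term N q z = Gf k N q z * term N p z).
  { rewrite !(term_prodk k N _ z Hz). unfold Gf.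
    rewrite (Rmult_comm (prodk k _) (INR (fact N) * _)), Rmult_assoc, <- prodk_mult. f_equal.
    apply prodk_ext. intros i Hi. unfold p. destruct (Nat.eq_dec (zz z i) 0). rewrite e. simpl. field.
    assert (INR (zz z i) <> 0) by (apply not_0_INR; auto).
    replace (q i ^ zz z i) with ((INR (zz z i) / INR N) ^ zz z i * (INR N * q i / INR (zz z i)) ^ zz z i)
      by (rewrite <- Rpow_mult_distr; f_equal; field; split; lra).
    field. apply INR_fact_neq_0. }
  rewrite E. pose proof (Gf_nonneg k N q z Hq). 
  pose proof (term_nonneg k N p z Hz Hp). nra. Qed.

Lemma term_lower : forall k N q z, (1 <= N)%nat -> In z (comps k N) ->
  (forall i, (i < k)%nat -> 0 <= q i) -> Gf k N q z <= term N q z * (exp 1 * INR N) ^ k.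
Proof. intros k N q z HN Hz Hq.
  assert (HNp : 0 < INR N) by (apply lt_0_INR; lia).
  pose proof Hz as Hz'. apply comps_spec in Hz' as [Hlen Hsum].
  set (Z := prodk k (fun i => INR (zz z i) ^ zz z i)).
  set (Fz := prodk k (fun i => INR (fact (zz z i)))).
  set (Q := prodk k (fun i => q i ^ zz z i)).
  assert (HZ : 0 < Z). { apply prodk_pos. intros. destruct (Nat.eq_dec (zz z i) 0). rewrite e; simpl; lra.
    apply pow_lt. apply lt_0_INR; lia. }
  assert (HFz : 0 < Fz) by (apply prodk_pos; intros; apply INR_fact_lt_0).
  assert (HQ : 0 <= Q) by (apply prodk_nonneg; intros; apply pow_le; auto).
  assert (E1 : Gf k N q z * Z = INR N ^ N * Q).
  { unfold Gf, Z, Q. rewrite <- prodk_mult.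
    replace (INR N ^ N) with (prodk k (fun i => INR N ^ zz z i)) by (rewrite <- Hlen; unfold zz; rewrite <- pow_list_sum, Hsum; auto).
    rewrite <- prodk_mult.
    apply prodk_ext. intros i Hi. unfold zz. destruct (Nat.eq_dec (nth i z O) 0). rewrite e; simpl; ring.
    rewrite <- !Rpow_mult_distr. f_equal. assert (INR (nth i z O) <> 0) by (apply not_0_INR; auto). field; auto. }
  assert (E2 : term N q z * Fz = INR (fact N) * Q).
  { rewrite (term_prodk k N q z Hz). unfold Fz, Q. rewrite Rmult_assoc, <- prodk_mult. f_equal.
    apply prodk_ext. intros. field. apply INR_fact_neq_0. }
  assert (E3 : exp (INR N) = prodk k (fun i => exp (INR (zz z i)))).
  { rewrite <- exp_sumk. f_equal. rewrite (comps_sum k N z Hz). auto. }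
  assert (I1 : Fz * exp (INR N) <= (exp 1 * INR N) ^ k * Z).
  { unfold Fz, Z. rewrite E3, <- prodk_mult, <- prodk_const, <- prodk_mult. apply prodk_le.
    intros i Hi. split. apply Rmult_le_pos. left; apply INR_fact_lt_0. left; apply exp_pos.
    eapply Rle_trans. apply fact_upper. apply Rmult_le_compat_r.
    apply pow_le, pos_INR. apply Rmult_le_compat_l. left; apply exp_pos. apply le_INR.
    pose proof (comps_le k N z i Hz Hi). lia. }
  assert (I2 : INR N ^ N <= INR (fact N) * exp (INR N)) by apply stirling1.
  assert (Hterm : 0 <= term N q z) by (apply (term_nonneg k); auto).
  apply Rmult_le_reg_r with Z; auto. rewrite E1.
  apply Rle_trans with (INR (fact N) * exp (INR N) * Q). apply Rmult_le_compat_r; auto.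
  apply Rle_trans with (term N q z * (Fz * exp (INR N))).
  right. rewrite <- Rmult_assoc, E2. ring.
  rewrite Rmult_assoc. apply Rmult_le_compat_l; auto. Qed.

Lemma G_rho : forall k N q z r, (1 <= N)%nat -> In z (comps k N) ->
  (forall i, (i < k)%nat -> 0 <= q i) ->
  ER_sumk k (fun i => rho_term (scaled_pt N z i) (q i)) = Fin r ->
  Gf k N q z = exp (- INR N * r).
Proof. intros k N q z r HN Hz Hq H.
  assert (HNp : 0 < INR N) by (apply lt_0_INR; lia).
  apply rho_fin in H as [Hr Hsupp]. subst r. rewrite <- sumk_scal, exp_sumk.
  apply prodk_ext. intros i Hi. unfold scaled_pt in *. unfold zz.
  destruct (Nat.eq_dec (nth i z O) 0). rewrite e. simpl. unfold Rdiv. rewrite Rmult_0_l, Rmult_0_l, Rmult_0_r, exp_0. auto.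
  assert (Hz0 : 0 < INR (nth i z O)) by (apply lt_0_INR; lia).
  assert (Hqi : 0 < q i). { destruct (Hq i Hi); auto. exfalso. apply (Hsupp i Hi); auto.
    apply Rgt_not_eq. apply Rdiv_lt_0_compat; auto. }
  replace (INR (nth i z O) / INR N / q i) with (/ (INR N * q i / INR (nth i z O))) by (field; repeat split; lra).
  rewrite ln_Rinv by (apply Rdiv_lt_0_compat; auto; apply Rmult_lt_0_compat; auto).
  replace (- INR N * (INR (nth i z O) / INR N * - ln (INR N * q i / INR (nth i z O)))) with
    (INR (nth i z O) * ln (INR N * q i / INR (nth i z O))) by (field; lra).
  rewrite exp_ln_pow; auto. apply Rdiv_lt_0_compat; auto; apply Rmult_lt_0_compat; auto. Qed.

Lemma term_zero : forall k N q z, In z (comps k N) ->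
  ER_sumk k (fun i => rho_term (scaled_pt N z i) (q i)) = PInf -> term N q z = 0.
Proof. intros. apply rho_inf in H0 as [i [Hi [H1 H2]]]. rewrite (term_prodk k) by auto.
  rewrite (prodk_zero k _ i Hi). ring. unfold zz. unfold scaled_pt in H1.
  destruct (nth i z O). exfalso; apply H1; simpl; unfold Rdiv; ring.
  rewrite H2. simpl. unfold Rdiv; ring. Qed.

Lemma exp_le_exp_compat : forall x y, x <= y -> exp x <= exp y.
Proof. intros. destruct H. left; apply exp_increasing; auto. subst; lra. Qed.

Lemma ln_le_mono : forall x y, 0 < x <= y -> ln x <= ln y.
Proof. intros x y [H1 H2]. destruct H2. left; apply ln_increasing; auto. subst; lra. Qed.

Lemma nat_large : forall A, exists N0, forall N, (N0 <= N)%nat -> A < INR N.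
Proof. intros. destruct (INR_archimed 1 A ltac:(lra)) as [n Hn]. exists n. intros.
  apply le_INR in H. lra. Qed.

Lemma ln_sqrt_bound : forall x, 1 <= x -> 1 + ln x <= 2 * sqrt x.
Proof. intros. assert (Hs : 0 < sqrt x) by (apply sqrt_lt_R0; lra).
  assert (ln x = 2 * ln (sqrt x)). { rewrite <- (sqrt_sqrt x) at 1 by lra.
    rewrite ln_mult by auto. ring. }
  pose proof (ln_le_sub1 (sqrt x) Hs). lra. Qed.

Lemma growth : forall c eta, 0 <= c -> 0 < eta -> exists N0, forall N, (N0 <= N)%nat -> (1 <= N)%nat ->
  c * (1 + ln (INR N + 1)) <= eta * INR N.
Proof. intros c eta Hc He. destruct (nat_large (16 * c * c / (eta * eta))) as [N0 HN0].
  exists N0. intros N H1 H2. pose proof (HN0 N H1). 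
  assert (HN : 1 <= INR N) by (apply (le_INR 1); auto).
  assert (1 + ln (INR N + 1) <= 2 * sqrt (2 * INR N)).
  { eapply Rle_trans. apply ln_sqrt_bound; lra. apply Rmult_le_compat_l. lra. apply sqrt_le_1_alt. lra. }
  set (t := sqrt (2 * INR N)) in *. assert (Ht : t * t = 2 * INR N) by (apply sqrt_sqrt; lra).
  assert (Ht0 : 0 <= t) by apply sqrt_pos.
  assert (16 * c * c <= eta * eta * (2 * INR N)).
  { assert (16 * c * c / (eta * eta) * (eta * eta) = 16 * c * c) by (field; lra).
    assert (0 < eta * eta) by nra. nra. }
  assert (4 * c <= eta * t). { rewrite <- Ht in H3. assert (0 <= eta * t) by nra.
    destruct (Rle_lt_dec (4 * c) (eta * t)); auto. exfalso.
    assert (0 < (4 * c - eta * t) * (4 * c + eta * t)) by (apply Rmult_lt_0_compat; lra). nra. }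
  nra. Qed.

Lemma fsum_zero : forall A (l : list A) g, (forall x, In x l -> g x = 0) -> fsum l g = 0.
Proof. induction l; unfold fsum in *; simpl; intros. auto. rewrite H by auto. rewrite IHl; auto. lra. Qed.

Lemma indic_cases : forall P, (P /\ indic P = 1) \/ (~ P /\ indic P = 0).
Proof. intros. unfold indic. destruct (excluded_middle_informative P); auto. Qed.

Lemma kernel_fsum : forall k F N x G, kernel k F N x G =
  fsum (comps k N) (fun z => indic (G (scaled_pt N z)) * term N (F x) z).
Proof. intros. reflexivity. Qed.

Lemma LD_v : forall k (F : vec -> vec), (forall x, inM k x -> inM k (F x)) ->
  forall C : vec -> Prop, closed_in_M k C ->
   forall eta, 0 < eta ->
   exists eps0, 0 < eps0 /\
     forall N, (0 < N)%nat -> / INR N < eps0 ->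
     forall x, inM k x ->
     forall m, is_inf (fun v => exists y, C y /\ v = rho k F x y) m ->
       upper_ok (/ INR N) (kernel k F N x C) m eta.
Proof. intros k F HF C HC eta Heta.
  destruct (growth (INR k) eta (pos_INR k) Heta) as [N0 HN0].
  exists (/ INR (S N0)). split. apply Rinv_0_lt_compat, lt_0_INR; lia.
  intros N HN Heps x Hx m [Hm1 Hm2].
  assert (HN0' : (N0 <= N)%nat). { destruct (le_lt_dec N0 N); auto. exfalso.
    assert (INR N < INR (S N0)) by (apply lt_INR; lia). assert (0 < INR N) by (apply lt_0_INR; lia).
    assert (/ INR (S N0) < / INR N) by (apply Rinv_lt_contravar; nra). lra. }
  assert (HNp : 0 < INR N) by (apply lt_0_INR; lia).
  destruct (HF x Hx) as [Hq _].
  rewrite kernel_fsum.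
  assert (Hnn : forall z, In z (comps k N) -> 0 <= indic (C (scaled_pt N z)) * term N (F x) z).
  { intros. destruct (indic_cases (C (scaled_pt N z))) as [[_ E]|[_ E]]; rewrite E.
    rewrite Rmult_1_l. apply (term_nonneg k); auto. lra. }
  destruct m as [m0|]; simpl.
  - set (P := fsum _ _).
    assert (HP : P <= INR (S N) ^ k * exp (- INR N * m0)).
    { eapply Rle_trans. apply fsum_le_const with (c := exp (- INR N * m0)).
      intros z Hz. destruct (indic_cases (C (scaled_pt N z))) as [[HCz E]|[_ E]]; rewrite E.
      + rewrite Rmult_1_l. assert (Hle := Hm1 _ (ex_intro _ (scaled_pt N z) (conj HCz eq_refl))).
        unfold rho in Hle.
        destruct (ER_cases (ER_sumk k (fun i => rho_term (scaled_pt N z i) (F x i)))) as [[r Hr]|Hr];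
          rewrite Hr in Hle; simpl in Hle.
        * eapply Rle_trans. apply (term_upper k); auto; lia. rewrite (G_rho k N (F x) z r); auto; try lia.
          apply exp_le_exp_compat. nra. 
        * rewrite (term_zero k N (F x) z); auto. left; apply exp_pos.
      + rewrite Rmult_0_l. left; apply exp_pos.
      + apply Rmult_le_compat_r. left; apply exp_pos. rewrite <- pow_INR. apply le_INR. apply comps_length. }
    destruct (Rle_lt_dec P 0). left. pose proof (fsum_nonneg _ _ _ Hnn). fold P in H. lra.
    right. split; auto.
    assert (ln P <= INR k * ln (INR (S N)) - INR N * m0).
    { eapply Rle_trans. apply ln_le_mono. split; eauto.
      assert (0 < INR (S N)) by (apply lt_0_INR; lia).
      rewrite ln_mult, ln_pow, ln_exp; auto. lra. apply pow_lt; auto. apply exp_pos. }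
    pose proof (HN0 N HN0' ltac:(lia)). rewrite S_INR in H.
    assert (INR k * ln (INR N + 1) <= eta * INR N) by (pose proof (pos_INR k); nra).
    apply Rle_trans with (/ INR N * (eta * INR N - INR N * m0)).
    apply Rmult_le_compat_l. left; apply Rinv_0_lt_compat; auto. lra.
    right. field. lra.
  - apply fsum_zero. intros z Hz. destruct (indic_cases (C (scaled_pt N z))) as [[HCz E]|[_ E]]; rewrite E.
    + assert (Hle := Hm1 _ (ex_intro _ (scaled_pt N z) (conj HCz eq_refl))).
      unfold rho in Hle. destruct (ER_sumk k (fun i => rho_term (scaled_pt N z i) (F x i))) eqn:Hr; simpl in Hle.
      contradiction. rewrite (term_zero k N (F x) z); auto. ring.
    + ring.
Qed.

Lemma F_cont : forall k (f : nat -> vec -> R)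
  (f_cont : forall i, (i < k)%nat -> forall x, inM k x ->
     forall e, 0 < e -> exists del, 0 < del /\
       forall y, inM k y -> distk k x y < del -> Rabs (f i y - f i x) < e),
  forall i, (i < k)%nat -> forall x, inM k x -> forall e, 0 < e -> exists del, 0 < del /\
    forall y, inM k y -> distk k x y < del -> Rabs (Fof f y i - Fof f x i) < e.
Proof. intros k f f_cont i Hi x Hx e He.
  destruct (f_cont i Hi x Hx (e / 2) ltac:(lra)) as [d1 [Hd1 H1]].
  set (a := Rabs (f i x) + 1). assert (Ha : 0 < a) by (unfold a; pose proof (Rabs_pos (f i x)); lra).
  exists (Rmin d1 (e / 2 / a)). split. apply Rmin_glb_lt; auto. apply Rdiv_lt_0_compat; lra.
  intros y Hy Hd. unfold Fof.
  assert (Hd1' : distk k x y < d1) by (eapply Rlt_le_trans; [apply Hd|apply Rmin_l]).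
  assert (Hd2 : distk k x y < e / 2 / a) by (eapply Rlt_le_trans; [apply Hd|apply Rmin_r]).
  pose proof (H1 y Hy Hd1'). pose proof (distk_coord k x y i Hi).
  assert (Hyi : 0 <= y i <= 1) by (split; [apply (proj1 Hy); auto|apply (inM_le1 k); auto]).
  replace (y i * f i y - x i * f i x) with (y i * (f i y - f i x) + f i x * (y i - x i)) by ring.
  eapply Rle_lt_trans. apply Rabs_triang. rewrite !Rabs_mult.
  rewrite (Rabs_minus_sym (y i)) . 
  assert (Rabs (y i) <= 1) by (rewrite Rabs_pos_eq; lra).
  assert (Rabs (y i) * Rabs (f i y - f i x) <= Rabs (f i y - f i x)).
  { pose proof (Rabs_pos (f i y - f i x)). nra. }
  assert (Rabs (f i x) * Rabs (x i - y i) < e / 2).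
  { assert (Rabs (f i x) * Rabs (x i - y i) <= a * distk k x y).
    { apply Rmult_le_compat; auto using Rabs_pos. unfold a; lra. }
    assert (Hlt : a * distk k x y < a * (e / 2 / a)) by (apply Rmult_lt_compat_l; auto).
    replace (a * (e / 2 / a)) with (e / 2) in Hlt by (field; lra). lra. }
  lra. Qed.

Definition zero_at (q : vec) (i : nat) : vec := fun j => if Nat.eq_dec j i then 0 else q j.

Lemma sumk_zero_at : forall k q i, (i < k)%nat -> sumk k (zero_at q i) = sumk k q - q i.
Proof. induction k; intros. lia. simpl. destruct (Nat.eq_dec i k).
  - subst. unfold zero_at at 2. destruct (Nat.eq_dec k k); [|congruence].
    rewrite (sumk_ext k (zero_at q k) q). ring. intros. unfold zero_at. destruct (Nat.eq_dec i k); auto; lia.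
  - rewrite IHk by lia. unfold zero_at. destruct (Nat.eq_dec k i); [lia|]. ring. Qed.

Lemma P_M0_lower : forall k F N x i, (1 <= N)%nat -> (i < k)%nat -> inM k (F x) ->
  (1 - F x i) ^ N <= kernel k F N x (inM0 k).
Proof. intros k F N x i HN Hi [Hq Hs].
  assert (HNp : 0 < INR N) by (apply lt_0_INR; lia).
  rewrite kernel_fsum. rewrite <- Hs, <- sumk_zero_at by auto. rewrite <- multinom.
  apply fsum_le. intros z Hz. fold (term N (zero_at (F x) i) z).
  destruct (Nat.eq_dec (zz z i) 0).
  - assert (inM0 k (scaled_pt N z)).
    { split. split. intros; unfold scaled_pt; apply Rdiv_le_0_compat; auto; apply pos_INR.
      unfold scaled_pt. transitivity (/ INR N * sumk k (fun i => INR (zz z i))).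
      rewrite <- sumk_scal. apply sumk_ext; intros; unfold zz, Rdiv; ring.
      rewrite (comps_sum k N z Hz). field; lra.
      apply (prodk_zero k _ i Hi). unfold scaled_pt. fold (zz z i). rewrite e. simpl. unfold Rdiv; ring. }
    destruct (indic_cases (inM0 k (scaled_pt N z))) as [[_ E]|[Hn _]]; [|contradiction]. rewrite E, Rmult_1_l.
    right. rewrite !(term_prodk k N _ z Hz). f_equal. apply prodk_ext. intros j Hj.
    unfold zero_at. destruct (Nat.eq_dec j i); auto. subst. rewrite e. auto.
  - assert (term N (zero_at (F x) i) z = 0).
    { rewrite (term_prodk k N _ z Hz). rewrite (prodk_zero k _ i Hi). ring. unfold zero_at.
      destruct (Nat.eq_dec i i); [|congruence]. destruct (zz z i). lia. simpl. unfold Rdiv; ring. }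
    rewrite H. destruct (indic_cases (inM0 k (scaled_pt N z))) as [[_ E]|[_ E]]; rewrite E.
    rewrite Rmult_1_l. apply (term_nonneg k); auto. lra. Qed.

Lemma LD0_thm : forall k (f : nat -> vec -> R)
  (f_cont : forall i, (i < k)%nat -> forall x, inM k x ->
     forall e, 0 < e -> exists del, 0 < del /\
       forall y, inM k y -> distk k x y < del -> Rabs (f i y - f i x) < e)
  (F_maps : forall x, inM k x -> inM k (Fof f x)),
  Hyp_LD0 k (kernel k (Fof f)).
Proof. intros k f f_cont F_maps c Hc.
  assert (Hec : exp (- c) < 1) by (rewrite <- exp_0; apply exp_increasing; lra).
  pose proof (exp_pos (- c)).
  set (d := 1 - exp (- c)).
  exists (fun x => inM k x /\ exists i, (i < k)%nat /\ Fof f x i < d). split; [|split].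
  - split. intros x [H1 _]; auto.
    intros x [Hx [i [Hi Hd]]]. destruct (F_cont k f f_cont i Hi x Hx (d - Fof f x i) ltac:(lra)) as [r [Hr H1]].
    exists r. split; auto. intros y Hy Hxy. split; auto. exists i. split; auto.
    pose proof (H1 y Hy Hxy). apply Rabs_def2 in H0. lra.
  - intros x [Hx Hp]. split; auto. destruct (prodk_zero_inv k x Hp) as [j [Hj Hxj]].
    exists j. split; auto. unfold Fof. rewrite Hxj. unfold d. lra.
  - intros del Hdel. exists O. intros N _ HN x [Hx [i [Hi Hd]]].
    pose proof (F_maps x Hx) as HFx.
    pose proof (P_M0_lower k (Fof f) N x i ltac:(lia) Hi HFx).
    assert (Hq1 : exp (- c) < 1 - Fof f x i) by (unfold d in Hd; lra).
    assert (Hpow : 0 < (1 - Fof f x i) ^ N) by (apply pow_lt; lra).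
    assert (HP : 0 < kernel k (Fof f) N x (inM0 k)) by lra.
    split; auto.
    assert (HNp : 0 < INR N) by (apply lt_0_INR; lia).
    assert (INR N * ln (1 - Fof f x i) <= ln (kernel k (Fof f) N x (inM0 k))).
    { rewrite <- ln_pow by lra. apply ln_le_mono. split; auto. }
    assert (- c < ln (1 - Fof f x i)). { rewrite <- (ln_exp (- c)). apply ln_increasing; auto. }
    apply Rle_trans with (ln (1 - Fof f x i)). lra.
    apply Rmult_le_reg_l with (INR N); auto. rewrite <- Rmult_assoc, Rinv_r, Rmult_1_l by lra. auto. Qed.

Lemma cont_pt_eps : forall f x0, continuity_pt f x0 -> forall e, 0 < e ->
  exists d, 0 < d /\ forall x, Rabs (x - x0) < d -> Rabs (f x - f x0) < e.
Proof. intros f x0 H e He. destruct (H e He) as [d [Hd H1]]. exists d. split; auto.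
  intros x Hx. destruct (Req_EM_T x x0). subst. rewrite Rminus_diag, Rabs_R0; auto.
  apply (H1 x). split. split. constructor. auto. simpl. unfold R_dist. auto. Qed.

Lemma ln_cont : forall t0, 0 < t0 -> continuity_pt ln t0.
Proof. intros. apply derivable_continuous_pt. exists (/ t0). apply derivable_pt_lim_ln; auto. Qed.

Lemma phi_cont_pos : forall t0, 0 < t0 -> continuity_pt (fun t => t * ln t) t0.
Proof. intros. apply derivable_continuous_pt.
  apply (derivable_pt_mult id ln). apply derivable_pt_id. exists (/ t0). apply derivable_pt_lim_ln; auto. Qed.

Lemma phi_small : forall t, 0 <= t <= 1 -> Rabs (t * ln t) <= 2 * sqrt t.
Proof. intros t [H0 H1]. destruct H0 as [H0|H0]; [|subst; rewrite Rmult_0_l, Rabs_R0, sqrt_0; lra].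
  assert (Hs : 0 < sqrt t) by (apply sqrt_lt_R0; auto).
  assert (Hl : ln t <= 0) by (rewrite <- ln_1; apply ln_le_mono; lra).
  rewrite Rabs_left1 by nra.
  assert (ln (/ sqrt t) <= / sqrt t - 1) by (apply ln_le_sub1; apply Rinv_0_lt_compat; auto).
  rewrite ln_Rinv in H by auto.
  assert (ln t = 2 * ln (sqrt t)). { rewrite <- (sqrt_sqrt t) at 1 by lra. rewrite ln_mult by auto. ring. }
  assert (Et : t = sqrt t * sqrt t) by (rewrite sqrt_sqrt; lra).
  assert (- ln t <= 2 / sqrt t) by (unfold Rdiv; lra).
  apply Rle_trans with (t * (2 / sqrt t)). replace (- (t * ln t)) with (t * (- ln t)) by ring. apply Rmult_le_compat_l; lra.
  rewrite Et at 1. right. field. lra. Qed.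

Lemma phi_cont : forall t0, 0 <= t0 -> forall e, 0 < e ->
  exists d, 0 < d /\ forall t, 0 <= t -> Rabs (t - t0) < d -> Rabs (t * ln t - t0 * ln t0) < e.
Proof. intros t0 Ht0 e He. destruct Ht0 as [Ht0|Ht0].
  - destruct (cont_pt_eps _ _ (phi_cont_pos t0 Ht0) e He) as [d [Hd H]]. exists d; split; auto.
  - subst. exists (Rmin 1 ((e / 2) * (e / 2))). split. apply Rmin_glb_lt; [lra|nra].
    intros t Ht Hd. rewrite Rmult_0_l, Rminus_0_r. rewrite Rminus_0_r, Rabs_pos_eq in Hd by auto.
    assert (t < 1) by (eapply Rlt_le_trans; [apply Hd|apply Rmin_l]).
    assert (t < (e / 2) * (e / 2)) by (eapply Rlt_le_trans; [apply Hd|apply Rmin_r]).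
    eapply Rle_lt_trans. apply phi_small; lra.
    assert (sqrt t < e / 2). { rewrite <- (sqrt_square (e / 2)) by lra. apply sqrt_lt_1_alt. lra. }
    lra. Qed.

Lemma Fpos : forall k (f : nat -> vec -> R),
  (forall i, (i < k)%nat -> forall x, inM k x -> 0 < f i x) ->
  forall x i, inM1 k x -> (i < k)%nat -> 0 < Fof f x i.
Proof. intros. unfold Fof. apply Rmult_lt_0_compat. apply (inM1_pos k); auto. apply H; auto. apply H0. Qed.

Lemma lnF_cont : forall k (f : nat -> vec -> R)
  (f_pos : forall i, (i < k)%nat -> forall x, inM k x -> 0 < f i x)
  (f_cont : forall i, (i < k)%nat -> forall x, inM k x ->
     forall e, 0 < e -> exists del, 0 < del /\
       forall y, inM k y -> distk k x y < del -> Rabs (f i y - f i x) < e),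
  forall i, (i < k)%nat -> forall x0, inM1 k x0 -> forall e, 0 < e -> exists d, 0 < d /\
    forall x, inM k x -> distk k x0 x < d -> 0 < Fof f x i /\ Rabs (ln (Fof f x i) - ln (Fof f x0 i)) < e.
Proof. intros k f f_pos f_cont i Hi x0 Hx0 e He.
  pose proof (Fpos k f f_pos x0 i Hx0 Hi) as Hq0.
  destruct (cont_pt_eps _ _ (ln_cont _ Hq0) e He) as [d1 [Hd1 H1]].
  destruct (F_cont k f f_cont i Hi x0 (proj1 Hx0) (Rmin d1 (Fof f x0 i / 2)) ltac:(apply Rmin_glb_lt; lra)) as [d2 [Hd2 H2]].
  exists d2. split; auto. intros x Hx Hd. pose proof (H2 x Hx Hd).
  assert (Rabs (Fof f x i - Fof f x0 i) < d1) by (eapply Rlt_le_trans; [apply H|apply Rmin_l]).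
  assert (Rabs (Fof f x i - Fof f x0 i) < Fof f x0 i / 2) by (eapply Rlt_le_trans; [apply H|apply Rmin_r]).
  apply Rabs_def2 in H3. split. lra. apply H1; auto. Qed.

Lemma rho_M1 : forall k (F : vec -> vec) x y, (forall i, (i < k)%nat -> 0 < F x i) ->
  (forall i, (i < k)%nat -> 0 <= y i) ->
  rho k F x y = Fin (sumk k (fun i => y i * ln (y i) - y i * ln (F x i))).
Proof. intros. unfold rho. rewrite rho_fin_intro. f_equal. apply sumk_ext. intros i Hi.
  destruct (H0 i Hi) as [Hp|Hz]. unfold Rdiv. rewrite ln_mult, ln_Rinv; auto. ring. apply Rinv_0_lt_compat; auto.
  rewrite <- Hz. ring. intros. pose proof (H i H1). lra. Qed.

Lemma Tcont : forall k (f : nat -> vec -> R)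
  (f_pos : forall i, (i < k)%nat -> forall x, inM k x -> 0 < f i x)
  (f_cont : forall i, (i < k)%nat -> forall x, inM k x ->
     forall e, 0 < e -> exists del, 0 < del /\
       forall y, inM k y -> distk k x y < del -> Rabs (f i y - f i x) < e),
  forall x y, inM1 k x -> inM k y -> forall i, (i < k)%nat -> forall e, 0 < e ->
  exists d, 0 < d /\ forall x' y', inM k x' -> inM k y' -> distk k x x' < d -> distk k y y' < d ->
    0 < Fof f x' i /\
    Rabs ((y' i * ln (y' i) - y' i * ln (Fof f x' i)) - (y i * ln (y i) - y i * ln (Fof f x i))) < e.
Proof. intros k f f_pos f_cont x y Hx Hy i Hi e He.
  destruct (phi_cont (y i) (proj1 Hy i Hi) (e / 3) ltac:(lra)) as [d1 [Hd1 H1]].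
  destruct (lnF_cont k f f_pos f_cont i Hi x Hx (e / 3) ltac:(lra)) as [d2 [Hd2 H2]].
  set (L := Rabs (ln (Fof f x i)) + 1). assert (HL : 0 < L) by (unfold L; pose proof (Rabs_pos (ln (Fof f x i))); lra).
  set (d3 := e / 3 / L). assert (Hd3 : 0 < d3) by (unfold d3; apply Rdiv_lt_0_compat; lra).
  exists (Rmin d1 (Rmin d2 d3)). split. repeat apply Rmin_glb_lt; auto.
  intros x' y' Hx' Hy' Hdx Hdy.
  assert (Hdx2 : distk k x x' < d2) by (eapply Rlt_le_trans; [apply Hdx|]; eapply Rle_trans; [apply Rmin_r|apply Rmin_l]).
  assert (Hdy1 : distk k y y' < d1) by (eapply Rlt_le_trans; [apply Hdy|apply Rmin_l]).
  assert (Hdy3 : distk k y y' < d3) by (eapply Rlt_le_trans; [apply Hdy|]; eapply Rle_trans; [apply Rmin_r|apply Rmin_r]).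
  destruct (H2 x' Hx' Hdx2) as [Hq' Hln]. split; auto.
  assert (Hyy : Rabs (y' i - y i) <= distk k y y') by (rewrite Rabs_minus_sym; apply distk_coord; auto).
  pose proof (H1 (y' i) (proj1 Hy' i Hi) ltac:(lra)).
  assert (Hy'1 : 0 <= y' i <= 1) by (split; [apply (proj1 Hy'); auto|apply (inM_le1 k); auto]).
  replace ((y' i * ln (y' i) - y' i * ln (Fof f x' i)) - (y i * ln (y i) - y i * ln (Fof f x i)))
    with ((y' i * ln (y' i) - y i * ln (y i)) - (y' i * (ln (Fof f x' i) - ln (Fof f x i))) - (ln (Fof f x i) * (y' i - y i))) by ring.
  eapply Rle_lt_trans. apply Rabs_triang. rewrite Rabs_Ropp.
  eapply Rle_lt_trans. apply Rplus_le_compat_r. eapply Rle_trans. unfold Rminus. apply Rabs_triang. rewrite Rabs_Ropp. apply Rle_refl.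
  rewrite !Rabs_mult.
  assert (Rabs (y' i) * Rabs (ln (Fof f x' i) - ln (Fof f x i)) <= Rabs (ln (Fof f x' i) - ln (Fof f x i))).
  { rewrite Rabs_pos_eq by lra. pose proof (Rabs_pos (ln (Fof f x' i) - ln (Fof f x i))). nra. }
  assert (Rabs (ln (Fof f x i)) * Rabs (y' i - y i) < e / 3).
  { apply Rle_lt_trans with (L * distk k y y'). apply Rmult_le_compat; auto using Rabs_pos. unfold L; lra.
    apply Rlt_le_trans with (L * d3). apply Rmult_lt_compat_l; auto. right. unfold d3. field. lra. }
  unfold Rminus in *. lra. Qed.

Lemma LD_i : forall k (f : nat -> vec -> R)
  (f_pos : forall i, (i < k)%nat -> forall x, inM k x -> 0 < f i x)
  (f_cont : forall i, (i < k)%nat -> forall x, inM k x ->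
     forall e, 0 < e -> exists del, 0 < del /\
       forall y, inM k y -> distk k x y < del -> Rabs (f i y - f i x) < e),
  ER_continuous_on k (fun x y => inM1 k x /\ inM k y) (rho k (Fof f)).
Proof. intros k f f_pos f_cont x y [Hx Hy].
  rewrite rho_M1. 2: intros; apply (Fpos k); auto. 2: apply Hy.
  intros e He. set (e' := e / (INR k + 1)).
  assert (He' : 0 < e') by (unfold e'; apply Rdiv_lt_0_compat; auto; pose proof (pos_INR k); lra).
  destruct (finite_delta (fun i d => forall x' y', inM k x' -> inM k y' -> distk k x x' < d -> distk k y y' < d ->
    0 < Fof f x' i /\
    Rabs ((y' i * ln (y' i) - y' i * ln (Fof f x' i)) - (y i * ln (y i) - y i * ln (Fof f x i))) < e') k)
    as [d [Hd H]].
  { intros i d0 d' H0 [H1 H2] x' y' ? ? ? ?. apply H0; auto; lra. }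
  { intros i Hi. apply (Tcont k f f_pos f_cont x y Hx Hy i Hi e' He'). }
  exists d. split; auto. intros x' y' [Hx' Hy'] Hdx Hdy.
  eexists. split. apply rho_M1. intros i Hi; apply (H i Hi x' y' (proj1 Hx') Hy' Hdx Hdy). apply Hy'.
  rewrite <- sumk_minus. eapply Rle_lt_trans. apply sumk_abs.
  apply Rle_lt_trans with (sumk k (fun _ => e')). apply sumk_le. intros i Hi. left.
  apply (H i Hi x' y' (proj1 Hx') Hy' Hdx Hdy).
  rewrite sumk_const. unfold e'. apply Rmult_lt_reg_r with (INR k + 1). pose proof (pos_INR k); lra.
  replace (INR k * (e / (INR k + 1)) * (INR k + 1)) with (INR k * e) by (field; pose proof (pos_INR k); lra).
  pose proof (pos_INR k). nra. Qed.

Lemma Int_part_mono : forall r s, r <= s -> (Int_part r <= Int_part s)%Z.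
Proof. intros. pose proof (base_Int_part r). pose proof (base_Int_part s).
  assert (IZR (Int_part r) < IZR (Int_part s + 1)) by (rewrite plus_IZR; lra).
  apply lt_IZR in H2. lia. Qed.

Lemma sumk_tele : forall k (a : nat -> R), sumk k (fun i => a (S i) - a i) = a k - a O.
Proof. induction k; simpl; intros. ring. rewrite IHk. ring. Qed.

Lemma rounding : forall k N (y : vec), (1 <= N)%nat -> (forall i, (i < k)%nat -> 0 <= y i) -> sumk k y = 1 ->
  exists z, In z (comps k N) /\ forall i, (i < k)%nat -> Rabs (INR (zz z i) - INR N * y i) < 1.
Proof. intros k N y HN Hy Hs.
  set (a := fun i => Int_part (INR N * sumk i y)).
  set (w := fun i => Z.to_nat (a (S i) - a i)).
  assert (Hmono : forall i, (i < k)%nat -> (a i <= a (S i))%Z).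
  { intros. unfold a. apply Int_part_mono. apply Rmult_le_compat_l. apply pos_INR. simpl.
    pose proof (Hy i H). lra. }
  assert (Hw : forall i, (i < k)%nat -> INR (w i) = IZR (a (S i)) - IZR (a i)).
  { intros. unfold w. rewrite INR_IZR_INZ, Z2Nat.id by (pose proof (Hmono i H); lia).
    apply minus_IZR. }
  set (z := map w (seq 0 k)).
  assert (Hlen : length z = k) by (unfold z; rewrite length_map, length_seq; auto).
  assert (Hnth : forall i, (i < k)%nat -> zz z i = w i).
  { intros. unfold zz, z. rewrite (nth_indep _ O (w O)) by (rewrite length_map, length_seq; auto).
    rewrite map_nth, seq_nth; auto. }
  assert (Ha0 : a O = 0%Z). { unfold a. simpl. rewrite Rmult_0_r. apply (Int_part_INR 0). }
  assert (Hak : a k = Z.of_nat N). { unfold a. rewrite Hs, Rmult_1_r. apply Int_part_INR. }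
  exists z. split.
  - apply comps_intro; auto. apply INR_eq. rewrite <- sumk_nth, Hlen.
    transitivity (sumk k (fun i => IZR (a (S i)) - IZR (a i))).
    apply sumk_ext. intros. fold (zz z i). rewrite Hnth; auto.
    rewrite (sumk_tele k (fun i => IZR (a i))). rewrite Ha0, Hak. rewrite <- INR_IZR_INZ. simpl; ring.
  - intros i Hi. rewrite Hnth, Hw by auto.
    pose proof (base_Int_part (INR N * sumk i y)). pose proof (base_Int_part (INR N * sumk (S i) y)).
    fold (a i) in H. fold (a (S i)) in H0. simpl sumk in H0.
    apply Rabs_def1; lra.
Qed.

Lemma near_min_gen : forall (B : vec -> Prop) (g : vec -> R) eta, (exists y, B y) ->
  (forall y, B y -> 0 <= g y) -> 0 < eta -> exists y0, B y0 /\ forall y, B y -> g y0 <= g y + eta.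
Proof. intros B g eta [y1 Hy1] Hnn He.
  destruct (completeness (fun v => exists y, B y /\ v = - g y)) as [L [HL1 HL2]].
  { exists 0. intros v [y [Hy Hv]]. subst. pose proof (Hnn y Hy). lra. }
  { exists (- g y1). eauto. }
  destruct (classic (exists y0, B y0 /\ - g y0 > L - eta)) as [[y0 [Hy0 H0]]|Hno].
  - exists y0. split; auto. intros y Hy. assert (- g y <= L) by (apply HL1; eauto). lra.
  - exfalso. assert (L <= L - eta). { apply HL2. intros v [y [Hy Hv]]. subst.
      destruct (Rle_lt_dec (- g y) (L - eta)); auto. exfalso; apply Hno; exists y; split; auto; lra. } lra.
Qed.

Lemma distk_self : forall k x, distk k x x = 0.
Proof. intros. apply Rle_antisym. apply distk_le. lra. intros. rewrite Rminus_diag, Rabs_R0; lra. apply distk_nonneg. Qed.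

Lemma inv_lt_of : forall a N, 0 < a -> / a < INR N -> / INR N < a.
Proof. intros. assert (0 < / a) by (apply Rinv_0_lt_compat; auto).
  assert (/ INR N < / / a) by (apply Rinv_lt_contravar; nra). rewrite Rinv_inv in H2. auto. Qed.

Lemma local_lower : forall k (f : nat -> vec -> R)
  (f_pos : forall i, (i < k)%nat -> forall x, inM k x -> 0 < f i x)
  (f_cont : forall i, (i < k)%nat -> forall x, inM k x ->
     forall e, 0 < e -> exists del, 0 < del /\
       forall y, inM k y -> distk k x y < del -> Rabs (f i y - f i x) < e)
  (F_maps : forall x, inM k x -> inM k (Fof f x)),
  forall c r, inM k c -> 0 < r -> forall eta, 0 < eta -> forall x0, inM1 k x0 ->
  exists d N0, 0 < d /\ forall x, inM1 k x -> distk k x0 x < d -> forall N, (N0 <= N)%nat -> (0 < N)%nat ->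
   forall m, is_inf (fun v => exists y, ballM k c r y /\ v = rho k (Fof f) x y) m ->
   lower_ok (/ INR N) (kernel k (Fof f) N x (ballM k c r)) m eta.
Proof. intros k f f_pos f_cont F_maps c r Hc Hr eta Heta x0 Hx0.
  set (F := Fof f).
  assert (Hq0 : forall i, (i < k)%nat -> 0 < F x0 i) by (intros; apply (Fpos k); auto).
  set (R0 := fun y => sumk k (fun i => y i * ln (y i) - y i * ln (F x0 i))).
  assert (HR0 : forall y, inM k y -> rho k F x0 y = Fin (R0 y)).
  { intros y Hy. apply rho_M1; auto. apply Hy. }
  assert (Hnn : forall y, ballM k c r y -> 0 <= R0 y).
  { intros y [Hy _]. pose proof (KL_ge_hell k F x0 y (R0 y) (F_maps x0 (proj1 Hx0)) Hy (HR0 y Hy)).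
    pose proof (sumk_nonneg k (fun i => (sqrt (y i) - sqrt (F x0 i)) ^ 2) (fun i _ => pow2_ge_0 _)). lra. }
  destruct (near_min_gen (ballM k c r) R0 (eta / 4)) as [y0 [[Hy0 Hcy0] Hmin]]; auto.
  { exists c. split; auto. rewrite distk_self; auto. } lra.
  set (s := r - distk k c y0). assert (Hs : 0 < s) by (unfold s; lra).
  pose proof (LD_i k f f_pos f_cont x0 y0 (conj Hx0 Hy0)) as Hcont. fold F in Hcont.
  rewrite (HR0 y0 Hy0) in Hcont.
  destruct (Hcont (eta / 4) ltac:(lra)) as [d1 [Hd1 Hc1]]. clear Hcont.
  destruct (finite_delta (fun i d => forall x, inM k x -> distk k x0 x < d ->
     0 < F x i /\ Rabs (ln (F x i) - ln (F x0 i)) < eta / 4) k) as [d2 [Hd2 Hc2]].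
  { intros i d0 d' H0 [H1 H2] x ? ?. apply H0; auto; lra. }
  { intros i Hi. apply (lnF_cont k f f_pos f_cont i Hi x0 Hx0 (eta / 4)). lra. }
  destruct (growth (INR k) (eta / 4) (pos_INR k) ltac:(lra)) as [N1 HN1].
  assert (Hsd : 0 < Rmin s d1) by (apply Rmin_glb_lt; auto).
  destruct (nat_large (/ Rmin s d1)) as [N2 HN2].
  exists (Rmin d1 d2), (max (max N1 N2) 1). split. apply Rmin_glb_lt; auto.
  intros x Hx Hdx N HN HN0 m [Hm1 Hm2].
  assert (HNp : 0 < INR N) by (apply lt_0_INR; lia).
  assert (Hinv : / INR N < Rmin s d1) by (apply inv_lt_of; auto; apply HN2; lia).
  assert (Hdx1 : distk k x0 x < d1) by (eapply Rlt_le_trans; [apply Hdx|apply Rmin_l]).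
  assert (Hdx2 : distk k x0 x < d2) by (eapply Rlt_le_trans; [apply Hdx|apply Rmin_r]).
  destruct (rounding k N y0 ltac:(lia) (proj1 Hy0) (proj2 Hy0)) as [z [Hz Hzb]].
  set (yN := scaled_pt N z).
  assert (HyN : inM k yN).
  { split. intros; unfold yN, scaled_pt; apply Rdiv_le_0_compat; auto; apply pos_INR.
    unfold yN, scaled_pt. transitivity (/ INR N * sumk k (fun i => INR (zz z i))).
    rewrite <- sumk_scal. apply sumk_ext; intros; unfold zz, Rdiv; ring.
    rewrite (comps_sum k N z Hz). field; lra. }
  assert (Hdy : distk k y0 yN < / INR N).
  { apply distk_lt. apply Rinv_0_lt_compat; auto. intros i Hi. unfold yN, scaled_pt. fold (zz z i).
    replace (y0 i - INR (zz z i) / INR N) with (- ((INR (zz z i) - INR N * y0 i) / INR N)) by (field; lra).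
    rewrite Rabs_Ropp. unfold Rdiv. rewrite Rabs_mult, (Rabs_pos_eq (/ INR N)) by (left; apply Rinv_0_lt_compat; auto).
    pose proof (Hzb i Hi). pose proof (Rinv_0_lt_compat _ HNp). nra. }
  assert (HyNball : ballM k c r yN).
  { split; auto. pose proof (distk_tri k c y0 yN). pose proof (Rmin_l s d1). unfold s in *. lra. }
  assert (Hdy1 : distk k y0 yN < d1) by (pose proof (Rmin_r s d1); lra).
  destruct (Hc1 x yN (conj Hx HyN) Hdx1 Hdy1) as [r' [Hr' Hr'b]].
  assert (Hq : forall i, (i < k)%nat -> 0 <= F x i) by (apply (F_maps x (proj1 Hx))).
  pose proof (term_lower k N (F x) z ltac:(lia) Hz Hq) as Htl.
  unfold rho in Hr'. rewrite (G_rho k N (F x) z r') in Htl; auto; try lia.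
  set (P := kernel k F N x (ballM k c r)).
  assert (HPt : term N (F x) z <= P).
  { unfold P. rewrite kernel_fsum.
    assert (E : term N (F x) z = indic (ballM k c r (scaled_pt N z)) * term N (F x) z).
    { destruct (indic_cases (ballM k c r (scaled_pt N z))) as [[_ E]|[Hn _]]. rewrite E; ring. contradiction. }
    rewrite E at 1. apply (fsum_ge_elem _ _ (fun z => indic (ballM k c r (scaled_pt N z)) * term N (F x) z)); auto.
    intros. destruct (indic_cases (ballM k c r (scaled_pt N x1))) as [[_ E']|[_ E']]; rewrite E'.
    rewrite Rmult_1_l. apply (term_nonneg k); auto. lra. }
  set (eN := exp 1 * INR N). assert (HeN : 0 < eN) by (unfold eN; pose proof (exp_pos 1); nra).
  change ((exp 1 * INR N) ^ k) with (eN ^ k) in Htl.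
  assert (HeNk : 0 < eN ^ k) by (apply pow_lt; auto).
  assert (Hterm : 0 < term N (F x) z).
  { pose proof (exp_pos (- INR N * r')). 
    destruct (Rle_lt_dec (term N (F x) z) 0); auto. pose proof (Rmult_le_compat_r (eN ^ k) _ _ (Rlt_le _ _ HeNk) r0). lra. }
  assert (HP : 0 < P) by lra.
  assert (Hln : - INR N * r' - INR k * (1 + ln (INR N + 1)) <= ln P).
  { assert (- INR N * r' <= ln P + ln (eN ^ k)).
    { rewrite <- (ln_exp (- INR N * r')). rewrite <- ln_mult by auto. apply ln_le_mono. split. apply exp_pos.
      eapply Rle_trans. apply Htl. apply Rmult_le_compat_r; lra. }
    rewrite ln_pow in H by auto. unfold eN in H. rewrite ln_mult, ln_exp in H by (auto; apply exp_pos).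
    assert (ln (INR N) <= ln (INR N + 1)) by (apply ln_le_mono; lra).
    pose proof (pos_INR k). nra. }
  assert (HlnN : / INR N * ln P >= - r' - eta / 4).
  { pose proof (HN1 N ltac:(lia) ltac:(lia)).
    apply Rle_ge. apply Rmult_le_reg_l with (INR N); auto. rewrite <- Rmult_assoc, Rinv_r, Rmult_1_l by lra.
    lra. }
  assert (Hlb : ER_le (Fin (R0 y0 - eta / 2)) m).
  { apply Hm2. intros v [y [[Hy Hcy] Hv]]. subst v.
    assert (Hqx : forall i, (i < k)%nat -> 0 < F x i) by (intros; apply (Fpos k); auto).
    fold F. rewrite (rho_M1 k F x y Hqx (proj1 Hy)). simpl.
    pose proof (Hmin y (conj Hy Hcy)).
    assert (R0 y - eta / 4 <= sumk k (fun i => y i * ln (y i) - y i * ln (F x i))).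
    { unfold R0. replace (eta / 4) with (eta / 4 * sumk k y) by (rewrite (proj2 Hy); ring). rewrite <- sumk_scal, <- sumk_minus.
      apply sumk_le. intros i Hi. destruct (Hc2 i Hi x (proj1 Hx) Hdx2) as [_ Hl].
      apply Rabs_def2 in Hl. pose proof (proj1 Hy i Hi). nra. }
    lra. }
  destruct m as [m'|]; simpl; auto. simpl in Hlb. split. fold F. auto.
  fold F. fold P. apply Rabs_def2 in Hr'b. lra.
Qed.

Lemma fold_max_le : forall A (g : A -> nat) l a, In a l -> (g a <= fold_right max O (map g l))%nat.
Proof. induction l; simpl; intros. contradiction. destruct H. subst. lia. pose proof (IHl a0 H). lia. Qed.

Lemma LD_iv : forall k (f : nat -> vec -> R)
  (f_pos : forall i, (i < k)%nat -> forall x, inM k x -> 0 < f i x)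
  (f_cont : forall i, (i < k)%nat -> forall x, inM k x ->
     forall e, 0 < e -> exists del, 0 < del /\
       forall y, inM k y -> distk k x y < del -> Rabs (f i y - f i x) < e)
  (F_maps : forall x, inM k x -> inM k (Fof f x)),
  forall K, Defs.compact k K -> (forall x, K x -> inM1 k x) ->
   forall c r, inM k c -> 0 < r ->
   forall eta, 0 < eta ->
   exists eps0, 0 < eps0 /\
     forall N, (0 < N)%nat -> / INR N < eps0 ->
     forall x, K x ->
     forall m, is_inf (fun v => exists y, ballM k c r y /\ v = rho k (Fof f) x y) m ->
       lower_ok (/ INR N) (kernel k (Fof f) N x (ballM k c r)) m eta.
Proof. intros k f f_pos f_cont F_maps K HK HK1 c r Hc Hr eta Heta.
  set (Good := fun t : vec * R * nat => K (fst (fst t)) /\ 0 < snd (fst t) /\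
    forall x, inM1 k x -> distk k (fst (fst t)) x < snd (fst t) -> forall N, (snd t <= N)%nat -> (0 < N)%nat ->
    forall m, is_inf (fun v => exists y, ballM k c r y /\ v = rho k (Fof f) x y) m ->
    lower_ok (/ INR N) (kernel k (Fof f) N x (ballM k c r)) m eta).
  set (U := fun (i : {t | Good t}) (x : vec) => distk k (fst (fst (proj1_sig i))) x < snd (fst (proj1_sig i))).
  destruct (HK {t | Good t} U) as [l Hl].
  - intros i x Hx. unfold U in *. exists (snd (fst (proj1_sig i)) - distk k (fst (fst (proj1_sig i))) x). split. lra.
    intros y Hy. pose proof (distk_tri k (fst (fst (proj1_sig i))) x y). lra.
  - intros x Hx. destruct (local_lower k f f_pos f_cont F_maps c r Hc Hr eta Heta x (HK1 x Hx)) as [d [N0 [Hd H]]].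
    assert (Hg : Good (x, d, N0)). { split; [|split]; simpl; auto. }
    exists (exist _ (x, d, N0) Hg). unfold U. simpl. rewrite distk_self. auto.
  - set (Nmax := fold_right max O (map (fun i : {t | Good t} => snd (proj1_sig i)) l)).
    exists (/ INR (S Nmax)). split. apply Rinv_0_lt_compat, lt_0_INR; lia.
    intros N HN Heps x Hx m Hm.
    assert (HNm : (Nmax < N)%nat). { destruct (le_lt_dec N Nmax); auto. exfalso.
      assert (INR N < INR (S Nmax)) by (apply lt_INR; lia). assert (0 < INR N) by (apply lt_0_INR; lia).
      assert (/ INR (S Nmax) < / INR N) by (apply Rinv_lt_contravar; nra). lra. }
    destruct (Hl x Hx) as [i [Hi HUi]].
    destruct i as [[[x0 d] N0] [HKx0 [Hd HG]]]. unfold U in HUi. simpl in HUi.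
    pose proof (fold_max_le _ (fun i : {t | Good t} => snd (proj1_sig i)) l _ Hi). simpl in H. fold Nmax in H.
    assert (HN0 : (N0 <= N)%nat) by (clearbody Nmax; lia). apply (HG x (HK1 x Hx) HUi N HN0 HN m Hm).
Qed.

Theorem mainTheorem19 (k : nat) (f : nat -> vec -> R)
  (f_pos : forall i, (i < k)%nat -> forall x, inM k x -> 0 < f i x)
  (f_cont : forall i, (i < k)%nat -> forall x, inM k x ->
     forall e, 0 < e -> exists del, 0 < del /\
       forall y, inM k y -> distk k x y < del -> Rabs (f i y - f i x) < e)
  (F_maps : forall x, inM k x -> inM k (Fof f x)) :
  Hyp_LD k (Fof f) (rho k (Fof f)) (kernel k (Fof f)) /\
  Hyp_LD0 k (kernel k (Fof f)).
Proof.
  split; [|apply LD0_thm; auto].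
  split; [|split; [|split; [|split]]].
  - apply LD_i; auto.
  - intros x y Hx Hy. apply LD_ii; auto.
  - apply LD_iii; auto.
  - apply LD_iv; auto.
  - intros C HC eta Heta. apply LD_v; auto.
Qed.
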